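(* Let $G$ be a graph belonging to one of the seven types of the FC catalog. If $G$ is neither $K_4$ nor a (full) $n$-wheel with $n$ even, then the chromatic number of $G$ is at most $3$. The graph $K_4$ and the $n$-wheels with $n$ even are 4-chromatic.
   Context: All graphs are finite and simple. A plane graph is a graph with a fixed crossing-free drawing in the plane. Two plane graphs are regarded as the same if one is carried to the other by a homeomorphism of the sphere. The size of a face is the number of vertices on its boundary walk, counted with multiplicity. A plane graph is called outerplanar if some single face has all of its vertices on its boundary. The n-wheel ($n\ge 4$) consists of a cycle (the rim) on $n-1$ vertices together with a center vertex drawn inside the rim and joined to every rim vertex by an edge (a radius); the 4-wheel is $K_4$. $\kappa$ denotes vertex connectivity. The FC catalog consists of the following seven types of plane graphs. Type 1: Start from the 3-prism: two disjoint triangles $x_1x_2x_3$ and $y_1y_2y_3$ plus the edges $x_iy_i$, drawn with one triangle inside the other. Replace each edge $x_iy_i$ by a path with $a_i\ge 0$ internal vertices. Type 2: Start from $K_4$ drawn with a vertex $c$ inside the triangle $t_1t_2t_3$. Replace each edge $ct_i$ by a path with $a_i\ge 1$ internal vertices. Type 3: Two vertices $\alpha_0,\alpha_1$ joined by three internally disjoint paths, each having at least two internal vertices. Type 4: An $n$-wheel with $n\ge 4$ from which some (possibly no) radii are deleted, such that the resulting plane graph is not outerplanar. Type 5: A cycle together with a (possibly empty) set of pairwise noncrossing chords, all drawn on the same side of the cycle. Type 6: $K_1$, or a connected outerplanar plane graph with $\kappa=1$; this includes $K_2$ and graphs with a cut vertex. Type 7: A disconnected outerplanar plane graph. *)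

(* Defs.v *)
From mathcomp Require Import all_boot.
Set Implicit Arguments. Unset Strict Implicit. Unset Printing Implicit Defensive.

Record sgraph (V : finType) := SGraph {
  adj : rel V;
  adj_sym : symmetric adj;
  adj_irr : irreflexive adj }.

Section Graphs.
Variable V : finType.
Implicit Type G : sgraph V.

Definition colorableb G (k : nat) : bool :=
  [exists c : {ffun V -> 'I_k},
     [forall x, [forall y, adj G x y ==> (c x != c y)]]].

Lemma colorable_exists G : exists k, colorableb G k.
Proof.
exists #|V|; apply/existsP; exists [ffun x => enum_rank x].
apply/forallP=> x; apply/forallP=> y; apply/implyP=> Hxy.
rewrite !ffunE; apply/negP=> /eqP/enum_rank_inj Exy.
by rewrite Exy (adj_irr G) in Hxy.
Qed.

Definition chromatic_number G : nat := ex_minn (colorable_exists G).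

Definition connected_in G (S : {set V}) : Prop :=
  forall x y, x \in S -> y \in S ->
    connect [rel u v | [&& adj G u v, u \in S & v \in S]] x y.

Definition connected G : Prop := connected_in G setT.

Definition k_connected G (k : nat) : Prop :=
  k < #|V| /\ forall X : {set V}, #|X| < k -> connected_in G (~: X).

Definition vertex_connectivity_is G (k : nat) : Prop :=
  k_connected G k /\ ~ k_connected G k.+1.

(* The vertices can be placed in convex position (cyclic order f) so that
   the edges, drawn as chords, are pairwise non-crossing. *)
Definition outerplanar G : Prop :=
  exists f : 'I_#|V| -> V, bijective f /\
    forall a b c d : 'I_#|V|, a < b -> b < c -> c < d ->
      ~~ (adj G (f a) (f c) && adj G (f b) (f d)).

Definition pedge (p : seq V) (x y : V) : bool :=
  has (fun q => (q == (x, y)) || (q == (y, x))) (zip p (behead p)).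

Definition path_from_to (p : seq V) (x y : V) : Prop :=
  [/\ uniq p, 2 <= size p, head x p = x & last x p = y].

Definition is_end (p : seq V) (x : V) : bool :=
  (p != [::]) && ((x == head x p) || (x == last x p)).

Definition union_of_paths G (ps : seq (seq V)) : Prop :=
  [/\ forall x y, adj G x y = has (fun p => pedge p x y) ps,
      forall v, has (fun p => v \in p) ps &
      forall i j, i < j -> j < size ps -> forall x,
        x \in nth [::] ps i -> x \in nth [::] ps j ->
        is_end (nth [::] ps i) x && is_end (nth [::] ps j) x].

(* rim vertices Some i, i : 'I_m (rim cycle i -- i+1 mod m), center None,
   radii kept: those to rim vertices in R *)
Definition wheel_adj (m : nat) (R : {set 'I_m}) : rel (option 'I_m) :=
  fun u w => match u, w with
  | Some i, Some j => (val j == (val i).+1 %% m) || (val i == (val j).+1 %% m)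
  | None, Some j => j \in R
  | Some i, None => i \in R
  | None, None => false
  end.

Definition iso_to_wheel G (m : nat) (R : {set 'I_m}) : Prop :=
  exists f : V -> option 'I_m, bijective f /\
    forall x y, adj G x y = wheel_adj R (f x) (f y).

(* the n-wheel (n >= 4): rim on n-1 vertices, all radii present *)
Definition is_wheel G (n : nat) : Prop :=
  4 <= n /\ iso_to_wheel G [set: 'I_n.-1].

Definition is_K4 G : Prop :=
  #|V| = 4 /\ forall x y, x != y -> adj G x y.

End Graphs.

(* Faces of the standard drawing of the wheel with radii set R (center inside
   the rim).  The outer face has only the rim vertices on its boundary.
   If R is empty, the single inner face has all vertices on its boundary.
   Otherwise the inner faces correspond to the radii r in R: the face
   following radius r (in the cyclic rim order) has on its boundary the
   center and the rim vertices r, r+1, ..., r' where r' is the next radius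
   endpoint after r (r' = r, i.e. the whole rim, if R = {r}).  Rim vertex v
   lies on that face iff no radius endpoint lies strictly between r and v. *)
Definition in_radii (m : nat) (R : {set 'I_m}) (k : nat) : bool :=
  [exists w in R, val w == k].

Definition wheel_face_has (m : nat) (R : {set 'I_m}) (r v : 'I_m) : bool :=
  [forall k : 'I_m, ((0 < val k) && (val k < (val v + m - val r) %% m))
                      ==> ~~ in_radii R ((val r + val k) %% m)].

(* the plane wheel-minus-radii is outerplanar: some face has all vertices
   on its boundary *)
Definition wheel_plane_outerplanar (m : nat) (R : {set 'I_m}) : Prop :=
  R = set0 \/ exists2 r, r \in R & forall v : 'I_m, wheel_face_has R r v.

Section Catalog.
Variable V : finType.
Implicit Type G : sgraph V.

(* Type 1: subdivided 3-prism *)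
Definition FC_type1 G : Prop :=
  exists x1 x2 x3 y1 y2 y3 : V, exists p1 p2 p3 : seq V,
    [/\ uniq [:: x1; x2; x3; y1; y2; y3],
        path_from_to p1 x1 y1, path_from_to p2 x2 y2, path_from_to p3 x3 y3 &
        union_of_paths G [:: [:: x1; x2]; [:: x2; x3]; [:: x3; x1];
                             [:: y1; y2]; [:: y2; y3]; [:: y3; y1]; p1; p2; p3]].

(* Type 2: K4 with the three edges c t_i each subdivided at least once *)
Definition FC_type2 G : Prop :=
  exists c t1 t2 t3 : V, exists p1 p2 p3 : seq V,
    [/\ uniq [:: c; t1; t2; t3],
        [/\ path_from_to p1 c t1, path_from_to p2 c t2, path_from_to p3 c t3 &
            [/\ 3 <= size p1, 3 <= size p2 & 3 <= size p3]] &
        union_of_paths G [:: [:: t1; t2]; [:: t2; t3]; [:: t3; t1]; p1; p2; p3]].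

Definition FC_type3 G : Prop :=
  exists a0 a1 : V, exists p1 p2 p3 : seq V,
    [/\ a0 != a1,
        [/\ path_from_to p1 a0 a1, path_from_to p2 a0 a1 & path_from_to p3 a0 a1],
        [/\ 4 <= size p1, 4 <= size p2 & 4 <= size p3] &
        union_of_paths G [:: p1; p2; p3]].

Definition FC_type4 G : Prop :=
  exists n, 4 <= n /\ exists R : {set 'I_n.-1},
    iso_to_wheel G R /\ ~ wheel_plane_outerplanar R.

(* Type 5: a cycle plus pairwise non-crossing chords on one side *)
Definition FC_type5 G : Prop :=
  exists n, 3 <= n /\ exists f : 'I_n -> V,
    [/\ bijective f,
        (forall i j : 'I_n, val j = (val i).+1 %% n -> adj G (f i) (f j)) &
        (forall a b c d : 'I_n, a < b -> b < c -> c < d ->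
           ~~ (adj G (f a) (f c) && adj G (f b) (f d)))].

Definition FC_type6 G : Prop :=
  #|V| = 1 \/ (connected G /\ outerplanar G /\ vertex_connectivity_is G 1).

Definition FC_type7 G : Prop :=
  ~ connected G /\ outerplanar G.

Definition in_FC G : Prop :=
  FC_type1 G \/ FC_type2 G \/ FC_type3 G \/ FC_type4 G \/ FC_type5 G \/
  FC_type6 G \/ FC_type7 G.

End Catalog.

(* Main.v *)
Require Import Defs.
From mathcomp Require Import all_boot zify.
From Stdlib Require Import Classical.
Set Implicit Arguments. Unset Strict Implicit. Unset Printing Implicit Defensive.

Section Col.
Variables (V : finType) (G : sgraph V).

Lemma nat_colorable k (c : V -> nat) :
  (forall v, c v < k) -> (forall x y, adj G x y -> c x != c y) -> colorableb G k.
Proof.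
move=> Hk Hc; apply/existsP; exists [ffun x => Ordinal (Hk x)].
apply/forallP=> x; apply/forallP=> y; apply/implyP=> Hxy.
by rewrite !ffunE; apply: contra (Hc _ _ Hxy) => /eqP [->].
Qed.

Lemma colorable_mono k l : colorableb G k -> k <= l -> colorableb G l.
Proof.
move=> /existsP [c /forallP Hc] kl.
apply: (@nat_colorable l (fun x => val (c x))).
  by move=> v; exact: leq_trans (ltn_ord _) kl.
move=> x y Hxy; have := forallP (Hc x) y; rewrite Hxy /=.
by [].
Qed.

Lemma chi_le3 : colorableb G 3 -> chromatic_number G <= 3.
Proof.
move=> H; rewrite /chromatic_number; case: ex_minnP => m _ Hm; exact: Hm.
Qed.

Lemma chi_eq4 : colorableb G 4 -> ~ colorableb G 3 -> chromatic_number G = 4.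
Proof.
move=> H4 N3; rewrite /chromatic_number; case: ex_minnP => m Pm Hm.
have := Hm _ H4; case: (leqP 4 m) => [h1 h2|h]; first by apply/eqP; rewrite eqn_leq h1 h2.
by move=> _; exfalso; apply: N3; apply: colorable_mono Pm _; lia.
Qed.

Lemma third (a b : nat) : exists k, k < 3 /\ k != a /\ k != b.
Proof.
case: (boolP ((a != 0) && (b != 0))) => H1; first by exists 0; lia.
case: (boolP ((a != 1) && (b != 1))) => H2; first by exists 1; lia.
by exists 2; lia.
Qed.

Lemma degen_color :
  (forall S : {set V}, (exists s, s \in S) -> exists v, v \in S /\
     exists x y, forall w, w \in S -> adj G v w -> w = x \/ w = y) ->
  colorableb G 3.
Proof.
move=> HD.
suff H : forall n (S : {set V}), #|S| <= n -> exists c : V -> nat,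
   (forall v, c v < 3) /\ forall u w, u \in S -> w \in S -> adj G u w -> c u != c w.
  have [c [c3 Hc]] := H _ [set: V] (leqnn _).
  by apply: (nat_colorable c3) => x y; apply: Hc; rewrite in_setT.
elim=> [|n IH] S HS.
  exists (fun _ => 0); split=> // u w uS; move: HS; rewrite leqn0 => /eqP/cards0_eq E.
  by rewrite E inE in uS.
case: (set_0Vmem S) => [->|[s sS]].
  by exists (fun _ => 0); split=> // u w; rewrite inE.
have [v [vS [x [y Hxy]]]] := HD S (ex_intro _ s sS).
have HS' : #|S :\ v| <= n by rewrite (cardsD1 v S) vS in HS.
have [c [c3 Hc]] := IH (S :\ v) HS'.
have [k [k3 [kx ky]]] := third (c x) (c y).
exists (fun u => if u == v then k else c u); split.
  by move=> u; case: (u == v).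
have key : forall w, w \in S -> adj G v w -> k != c w /\ w != v.
  move=> w wS vw; split; first by case: (Hxy w wS vw) => ->.
  by apply/eqP=> E; move: vw; rewrite E (adj_irr G).
move=> u w uS wS uw /=.
case: (eqVneq u v) => [Euv|Nuv].
  rewrite Euv in uw *; have [h1 h2] := key w wS uw; by rewrite (negbTE h2).
case: (eqVneq w v) => [Ewv|Nwv].
  rewrite Ewv in uw *; have vu : adj G v u by rewrite (adj_sym G v u).
  have [h1 h2] := key u uS vu.
  by rewrite ?eqxx eq_sym.
by apply: Hc => //; rewrite !inE ?Nuv ?Nwv.
Qed.

End Col.

Section Degen.
Variables (V : finType) (G : sgraph V) (pos : V -> nat).
Hypothesis pos_inj : injective pos.
Hypothesis NC : forall u w x y, pos u < pos w -> pos w < pos x -> pos x < pos y ->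
  adj G u x -> adj G w y -> False.

Definition betw (S : {set V}) a c := exists b, b \in S /\ pos a < pos b /\ pos b < pos c.
Definition PP (S : {set V}) a c := [/\ a \in S, c \in S, adj G a c, pos a < pos c & betw S a c].

Lemma adjS u w : adj G u w -> adj G w u.
Proof. by rewrite (adj_sym G u w). Qed.

Lemma adjN u w : adj G u w -> u != w.
Proof. by apply: contraTneq => ->; rewrite (adj_irr G). Qed.

Definition Goal (S : {set V}) := exists v, v \in S /\
     exists x y, forall w, w \in S -> adj G v w -> w = x \/ w = y.

Lemma degen_pair (S : {set V}) d : forall a c, PP S a c -> pos c - pos a <= d -> Goal S.
Proof.
elim: d => [|d IH] a c [aS cS ac lac [b0 [b0S [h1 h2]]]] hd; first by lia.
pose B := [set b in S | (pos a < pos b) && (pos b < pos c)].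
have b0B : b0 \in B by rewrite inE b0S h1 h2.
case: (arg_minnP pos b0B) => b bB bmin.
have : b \in B by [].
rewrite inE => /andP [bS /andP [ab bc]].
case: (classic (exists w, [/\ w \in S, adj G b w, pos b < pos w, pos w <= pos c & betw S b w])).
  move=> [w [wS bw bw1 bw2 bbw]].
  have Hp : PP S b w by split.
  apply: (IH b w Hp); lia.
move=> Hno; exists b; split=> //; exists a.
have Hno' : forall w, w \in S -> adj G b w -> pos b < pos w -> pos w <= pos c -> ~ betw S b w.
  by move=> w wS bw h3 h4 hb; apply: Hno; exists w; split.
case: (classic (exists w0, [/\ w0 \in S, adj G b w0, pos b < pos w0 & pos w0 < pos c])).
  move=> [w0 [w0S bw0 l1 l2]]; exists w0 => w wS bw.
  case: (ltngtP (pos w) (pos a)) => [lwa|lwa|/pos_inj]; last by left.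
  - by exfalso; apply: (NC lwa ab bc) => //; apply: adjS.
  case: (ltngtP (pos w) (pos b)) => [lwb|lwb|/pos_inj Ewb].
  - have: w \in B by rewrite inE wS lwa /=; lia.
    by move=> /bmin; lia.
  - case: (ltngtP (pos w) (pos c)) => [lwc|lwc|/pos_inj Ewc].
    + case: (ltngtP (pos w) (pos w0)) => [lww|lww|/pos_inj]; last by right.
      * exfalso; apply: (Hno' w0 w0S bw0 l1) => //; first by lia.
        by exists w; split.
      * exfalso; apply: (Hno' w wS bw lwb) => //; first by lia.
        by exists w0; split.
    + by exfalso; apply: (NC ab bc lwc).
    + exfalso; rewrite Ewc in bw lwb; apply: (Hno' c cS bw lwb (leqnn _)).
      by exists w0; split.
  - by move: bw; rewrite Ewb (adj_irr G).
move=> Hno2; exists c => w wS bw.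
case: (ltngtP (pos w) (pos a)) => [lwa|lwa|/pos_inj]; last by left.
- by exfalso; apply: (NC lwa ab bc) => //; apply: adjS.
case: (ltngtP (pos w) (pos b)) => [lwb|lwb|/pos_inj Ewb].
- have: w \in B by rewrite inE wS lwa /=; lia.
  by move=> /bmin; lia.
- case: (ltngtP (pos w) (pos c)) => [lwc|lwc|/pos_inj Ewc]; last by right.
  + by exfalso; apply: Hno2; exists w; split.
  + by exfalso; apply: (NC ab bc lwc).
- by move: bw; rewrite Ewb (adj_irr G).
Qed.

Lemma degen (S : {set V}) : (exists s, s \in S) -> Goal S.
Proof.
move=> [s sS].
case: (classic (exists a c, PP S a c)) => [[a [c Hac]]|Hno].
  exact: (degen_pair Hac (leqnn _)).
case: (arg_minnP pos sS) => v vS vmin; exists v; split=> //.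
case: (classic (exists w0, w0 \in S /\ adj G v w0)) => [[w0 [w0S vw0]]|Hn]; last first.
  by exists v, v => w wS vw; exfalso; apply: Hn; exists w.
exists w0, w0 => w wS vw; left.
have lvw : forall u, u \in S -> adj G v u -> pos v < pos u.
  move=> u uS vu; have := vmin u uS; rewrite leq_eqVlt => /orP [/eqP/pos_inj E|//].
  by move: vu; rewrite E (adj_irr G).
case: (ltngtP (pos w) (pos w0)) => [l|l|/pos_inj //].
- exfalso; apply: Hno; exists v, w0; split=> //; first exact: lvw.
  by exists w; split; [done | split; [exact: lvw | done]].
- exfalso; apply: Hno; exists v, w; split=> //; first exact: lvw.
  by exists w0; split; [done | split; [exact: lvw | done]].
Qed.

End Degen.

Definition tcol (A B : nat) : nat :=
  if (A != 0) && (B != 0) then 0 else if (A != 1) && (B != 1) then 1 else 2.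

Lemma tcolP A B : [/\ tcol A B < 3, tcol A B != A & tcol A B != B].
Proof.
rewrite /tcol; case: (boolP ((A != 0) && (B != 0))) => h1; first by split; lia.
case: (boolP ((A != 1) && (B != 1))) => h2; split; lia.
Qed.

Definition pathcol A B L k :=
  if k == 0 then A else if k == L then B
  else if odd k then tcol A B else tcol (tcol A B) B.

Lemma pathcol_lt A B L k : A < 3 -> B < 3 -> pathcol A B L k < 3.
Proof.
rewrite /pathcol => hA hB; case: ifP => // _; case: ifP => // _.
case: (tcolP A B) => ? _ _; case: (tcolP (tcol A B) B) => ? _ _; by case: ifP.
Qed.

Lemma pathcol_ok A B L k : k < L -> ((L == 1) ==> (A != B)) ->
  pathcol A B L k != pathcol A B L k.+1.
Proof.
move=> kL HL; rewrite /pathcol /=.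
case: (tcolP A B) => _ t1 t2; case: (tcolP (tcol A B) B) => _ u1 u2.
case: (eqVneq k 0) => [->|k0] /=.
  case: (eqVneq 1 L) => [E|N1]; first by move: HL; rewrite -E.
  by rewrite eq_sym.
case: (eqVneq k L) => [E|kL']; first by lia.
case: (eqVneq k.+1 L) => [E|kL1].
  by case: (odd k); rewrite // eq_sym.
by case: (odd k) => /=; rewrite // eq_sym.
Qed.

Definition pok (V : finType) (e : V -> nat) (x0 : V) (p : seq V) :=
  [&& uniq p, 1 < size p & (size p == 2) ==> (e (nth x0 p 0) != e (nth x0 p 1))].
Arguments pok : simpl never.

Section Paths.
Variables (V : finType) (G : sgraph V) (x0 : V) (ps : seq (seq V)) (e : V -> nat).
Hypothesis Hu : union_of_paths G ps.
Hypothesis He : forall v, e v < 3.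
Hypothesis Hp : all (pok e x0) ps.

Definition inner (p : seq V) v := (v \in p) && ~~ is_end p v.
Definition pcol (p : seq V) v :=
  pathcol (e (nth x0 p 0)) (e (nth x0 p (size p).-1)) (size p).-1 (index v p).
Definition pscol v := let i := find (fun p => inner p v) ps in
  if i < size ps then pcol (nth [::] ps i) v else e v.

Lemma is_endE (p : seq V) v : 0 < size p ->
  is_end p v = (v == nth x0 p 0) || (v == nth x0 p (size p).-1).
Proof.
case: p => [//|h t] _; rewrite /is_end /=.
by rewrite (nth_last x0 (h :: t)) /=.
Qed.

Lemma Hx i j x : i < size ps -> j < size ps -> i != j ->
  x \in nth [::] ps i -> x \in nth [::] ps j -> is_end (nth [::] ps i) x.
Proof.
case: Hu => _ _ H3 hi hj.
case: (ltngtP i j) => [l|l|->] // _ xi xj.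
  by case/andP: (H3 i j l hj x xi xj).
by case/andP: (H3 j i l hi x xj xi).
Qed.

Lemma Hpi i : i < size ps -> [&& uniq (nth [::] ps i), 1 < size (nth [::] ps i) &
   (size (nth [::] ps i) == 2) ==> (e (nth x0 (nth [::] ps i) 0) != e (nth x0 (nth [::] ps i) 1))].
Proof. by move=> hi; have := allP Hp _ (mem_nth [::] hi); rewrite /pok. Qed.

Lemma key i k : i < size ps -> k < size (nth [::] ps i) ->
  pscol (nth x0 (nth [::] ps i) k) = pcol (nth [::] ps i) (nth x0 (nth [::] ps i) k).
Proof.
move=> hi hk; have /and3P [pu ps2 _] := Hpi hi.
set p := nth [::] ps i; set v := nth x0 p k.
rewrite -/p in pu ps2 hk.
have vp : v \in p by apply: mem_nth.
rewrite /pscol.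
case: (boolP (inner p v)) => Hin.
  have hh : has (fun q => inner q v) ps by apply/(has_nthP [::]); exists i.
  move: (hh); rewrite has_find => ->.
  have := nth_find [::] hh; set j := find _ _ => Hj.
  case: (eqVneq j i) => [->//|nji].
  have jlt : j < size ps by rewrite -has_find.
  move: Hin; rewrite /inner vp /=.
  case/andP: Hj => vj _.
  have nij : i != j by rewrite eq_sym.
  by rewrite (Hx hi jlt nij vp vj).
have hh : ~~ has (fun q => inner q v) ps.
  apply/negP => hh.
  have := nth_find [::] hh; set j := find _ _ => Hj.
  have jlt : j < size ps by rewrite -has_find.
  case: (eqVneq j i) => [E|nji]; first by move: Hj Hin; rewrite E => ->.
  case/andP: Hj => vj; rewrite (Hx jlt hi nji vj vp) //.
have hs : (find (fun q => inner q v) ps < size ps) = false by rewrite -has_find (negbTE hh).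
rewrite hs.
have p0 : 0 < size p by lia.
move: Hin; rewrite /inner vp /= negbK is_endE //.
rewrite /pcol /v index_uniq // /pathcol.
case/orP => /eqP E.
  have k0 : k = 0 by apply/eqP; rewrite -(nth_uniq x0 hk p0 pu) E.
  by rewrite k0.
have pL : (size p).-1 < size p by lia.
have kL : k = (size p).-1 by apply/eqP; rewrite -(nth_uniq x0 hk pL pu) E.
case: eqP => [k0|_]; first by lia.
by rewrite kL eqxx.
Qed.

Lemma paths_color : exists c : V -> nat,
  (forall v, c v < 3) /\ (forall x y, adj G x y -> c x != c y).
Proof.
exists pscol; split.
  move=> v; rewrite /pscol; case: ifP => // _; exact: pathcol_lt.
move=> x y; case: Hu => -> _ _ /(has_nthP [::]) [i hi].
set p := nth [::] ps i; have /and3P [pu ps2 H2] := Hpi hi; rewrite -/p in pu ps2 H2.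
move=> /hasP [q] /(nthP (x0, x0)) [k]; rewrite size_zip size_behead => hk <-.
rewrite nth_zip_cond size_zip size_behead hk nth_behead /=.
have hk' : k < (size p).-1 := leq_trans hk (geq_minr _ _).
have hk1 : k < size p by lia.
have hk2 : k.+1 < size p by lia.
have Ok : pathcol (e (nth x0 p 0)) (e (nth x0 p (size p).-1)) (size p).-1 k !=
          pathcol (e (nth x0 p 0)) (e (nth x0 p (size p).-1)) (size p).-1 k.+1.
  apply: pathcol_ok; first by lia.
  apply/implyP => /eqP h; have : size p == 2 by lia.
  by move: H2 => /implyP H2 /H2; rewrite h.
case/orP => /eqP [<- <-].
  by rewrite !key // /pcol !index_uniq.
by rewrite !key // /pcol !index_uniq // eq_sym.
Qed.

End Paths.

Lemma rim_step m (i j : 'I_m) : val j == (val i).+1 %% m ->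
  ((val i).+1 < m /\ val j = (val i).+1) \/ ((val i).+1 = m /\ val j = 0).
Proof.
move=> /eqP ->; case: (ltnP (val i).+1 m) => h.
  by left; rewrite modn_small.
have hi : val i < m := ltn_ord i.
have E : (val i).+1 = m by lia.
by right; rewrite E modnn.
Qed.

Definition wcolp m (o : option 'I_m) : nat :=
  match o with None => 2 | Some i => val i %% 2 end.
Definition wcolr m (r cc : nat) (o : option 'I_m) : nat :=
  match o with None => cc | Some i =>
    if val i == r then 2 else if val i < r then val i %% 2 else (val i).+1 %% 2 end.

Lemma rim_sym m (P : nat -> nat -> Prop) (i j : 'I_m) :
  (forall a b : nat, a < m -> b < m ->
     ((a.+1 < m /\ b = a.+1) \/ (a.+1 = m /\ b = 0)) -> P a b /\ P b a) ->
  wheel_adj set0 (Some i) (Some j) -> P i j.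
Proof.
move=> H /= /orP [/rim_step h|/rim_step h].
  by case: (H _ _ (ltn_ord i) (ltn_ord j) h).
by case: (H _ _ (ltn_ord j) (ltn_ord i) h).
Qed.

Lemma wheel_adj_rim m R (i j : 'I_m) :
  wheel_adj R (Some i) (Some j) = wheel_adj set0 (Some i) (Some j).
Proof. by []. Qed.

Lemma wcolp_ok m (R : {set 'I_m}) (u w : option 'I_m) : ~~ odd m ->
  wheel_adj R u w -> wcolp u != wcolp w.
Proof.
move=> hm0; have hm : m %% 2 = 0 by rewrite modn2 (negbTE hm0).
case: u => [i|]; case: w => [j|] //=; last first.
- by move=> _; lia.
- by move=> _; lia.
move=> h0; have h : wheel_adj set0 (Some i) (Some j) := h0.
apply: (rim_sym (P := fun a b => a %% 2 != b %% 2)) h => a b ha hb.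
case=> [[h1 ->]|[h1 ->]]; split; lia.
Qed.

Lemma wcolr_ok m (R : {set 'I_m}) r cc (u w : option 'I_m) : odd m -> 3 <= m -> r < m ->
  (forall i : 'I_m, i \in R -> (val i != r) || (2 < cc)) -> 2 < cc \/ cc = 2 ->
  wheel_adj R u w -> wcolr r cc u != wcolr r cc w.
Proof.
move=> hm0 m3 rm hR hcc; have hm : m %% 2 = 1 by rewrite modn2 hm0.
case: u => [i|]; case: w => [j|] //=.
- move=> h0; have h : wheel_adj set0 (Some i) (Some j) := h0.
  apply: (rim_sym (P := fun a b =>
    (if a == r then 2 else if a < r then a %% 2 else a.+1 %% 2) !=
    (if b == r then 2 else if b < r then b %% 2 else b.+1 %% 2))) h => a b ha hb.
  case=> [[h1 ->]|[h1 ->]]; split; do ! case: ifP; lia.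
- move=> jR; have := hR i jR; have : val i < m := ltn_ord i; do ! case: ifP; lia.
- move=> jR; have := hR j jR; have : val j < m := ltn_ord j; do ! case: ifP; lia.
Qed.

Lemma wheel_not3 (V : finType) (G : sgraph V) m (f : V -> option 'I_m) :
  bijective f -> (forall x y, adj G x y = wheel_adj setT (f x) (f y)) ->
  odd m -> 3 <= m -> ~ colorableb G 3.
Proof.
case: m f => [|m] f // [g fg gf] Hadj hm m3 /existsP [c /forallP Hc].
pose h o := val (c (g o)).
have hlt : forall o, h o < 3 by move=> o; exact: ltn_ord.
have hpr : forall o1 o2, wheel_adj setT o1 o2 -> h o1 != h o2.
  move=> o1 o2 ho; have := forallP (Hc (g o1)) (g o2); rewrite Hadj !gf ho /=.
  by apply: contra => /eqP E; apply/eqP/val_inj.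
pose K := h None; pose s0 := h (Some (inord 0)).
have hK : forall i, h (Some i) != K by move=> i; apply: hpr; rewrite /= in_setT.
have s0K : s0 != K by apply: hK.
have claim : forall k, k < m.+1 -> h (Some (inord k)) = if odd k then 3 - K - s0 else s0.
  elim=> [|k IH] hk; first by [].
  have adjk : wheel_adj setT (Some (inord k : 'I_m.+1)) (Some (inord k.+1)).
    rewrite /= !inordK ?(modn_small hk) ?eqxx //; lia.
  have := hpr _ _ adjk; have := hK (inord k.+1); have := hK (inord k).
  have := hlt (Some (inord k)); have := hlt (Some (inord k.+1)); have := hlt None.
  rewrite -/K (IH (ltnW hk)) oddS.
  have := hlt (Some (inord 0)); rewrite -/s0.
  by case: (odd k) => /=; lia.
have adjl : wheel_adj setT (Some (inord m : 'I_m.+1)) (Some (inord 0)).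
  by rewrite /= !inordK ?modnn ?eqxx.
have := hpr _ _ adjl; rewrite claim //.
have : ~~ odd m by move: hm => /=; case: (odd m).
by move=> /negbTE ->; rewrite eqxx.
Qed.

Lemma outer_color (V : finType) (G : sgraph V) n (f : 'I_n -> V) : bijective f ->
  (forall a b c d : 'I_n, a < b -> b < c -> c < d ->
      ~~ (adj G (f a) (f c) && adj G (f b) (f d))) -> colorableb G 3.
Proof.
case=> g fg gf Hnc; apply: degen_color => S HS.
have pinj : injective (fun v => val (g v)).
  by move=> u w /val_inj /(can_inj gf).
apply: (@degen V G (fun v => val (g v)) pinj) => // u w x y h1 h2 h3 ux wy.
by have := Hnc _ _ _ _ h1 h2 h3; rewrite !gf ux wy.
Qed.

Lemma col_of_nat (V : finType) (G : sgraph V) k :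
  (exists c : V -> nat, (forall v, c v < k) /\ (forall x y, adj G x y -> c x != c y)) ->
  colorableb G k.
Proof. by case=> c [h1 h2]; exact: (nat_colorable h1 h2). Qed.

Lemma pft_ok (V : finType) (e : V -> nat) x0 p x y : path_from_to p x y ->
  e x != e y -> pok e x0 p.
Proof.
case=> pu ps hx hy exy; rewrite /pok pu ps /=; apply/implyP => /eqP s2.
case: p pu ps hx hy s2 => [//|a [//|b [|//]]] _ _ /= -> -> _ //.
Qed.

Lemma pft_ok3 (V : finType) (e : V -> nat) x0 p x y : path_from_to p x y ->
  3 <= size p -> pok e x0 p.
Proof.
case=> pu ps hx hy s3; rewrite /pok pu ps /=; apply/implyP => /eqP s2; lia.
Qed.

Lemma pair_ok (V : finType) (e : V -> nat) x0 (a b : V) : a != b -> e a != e b ->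
  pok e x0 [:: a; b].
Proof. by move=> ab eab; rewrite /pok /= inE ab eab. Qed.

Lemma type1_col (V : finType) (G : sgraph V) : FC_type1 G -> colorableb G 3.
Proof.
case=> [x1 [x2 [x3 [y1 [y2 [y3 [p1 [p2 [p3 [Hu P1 P2 P3 HU]]]]]]]]]].
set L := [:: x1; x2; x3; y1; y2; y3].
pose e v := nth 0 [:: 0; 1; 2; 1; 2; 0] (index v L).
have eL : forall i, i < 6 -> e (nth x1 L i) = nth 0 [:: 0; 1; 2; 1; 2; 0] i.
  by move=> i hi; rewrite /e index_uniq.
have ex1 := eL 0 erefl; have ex2 := eL 1 erefl; have ex3 := eL 2 erefl.
have ey1 := eL 3 erefl; have ey2 := eL 4 erefl; have ey3 := eL 5 erefl.
simpl in ex1, ex2, ex3, ey1, ey2, ey3.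
have d : forall i j, i < 6 -> j < 6 -> i != j -> nth x1 L i != nth x1 L j.
  by move=> i j hi hj; rewrite (@nth_uniq _ x1 L i j hi hj Hu).
have h12 : x1 != x2 := d 0 1 isT isT isT.
have h23 : x2 != x3 := d 1 2 isT isT isT.
have h31 : x3 != x1 := d 2 0 isT isT isT.
have g12 : y1 != y2 := d 3 4 isT isT isT.
have g23 : y2 != y3 := d 4 5 isT isT isT.
have g31 : y3 != y1 := d 5 3 isT isT isT.
apply: col_of_nat; apply: (paths_color (x0 := x1) (e := e) HU).
  by move=> v; rewrite /e; case: (index v L) => [|[|[|[|[|[|?]]]]]] //=; rewrite nth_nil.
rewrite /= !(pair_ok x1 (e := e)) ?ex1 ?ex2 ?ex3 ?ey1 ?ey2 ?ey3 //.
by rewrite (pft_ok x1 (e := e) P1) ?(pft_ok x1 (e := e) P2) ?(pft_ok x1 (e := e) P3) ?ex1 ?ex2 ?ex3 ?ey1 ?ey2 ?ey3.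
Qed.

Lemma type2_col (V : finType) (G : sgraph V) : FC_type2 G -> colorableb G 3.
Proof.
case=> [c [t1 [t2 [t3 [p1 [p2 [p3 [Hu [P1 P2 P3 [s1 s2 s3]] HU]]]]]]]].
set L := [:: c; t1; t2; t3].
pose e v := nth 0 [:: 0; 0; 1; 2] (index v L).
have eL : forall i, i < 4 -> e (nth c L i) = nth 0 [:: 0; 0; 1; 2] i.
  by move=> i hi; rewrite /e index_uniq.
have ex1 := eL 1 erefl; have ex2 := eL 2 erefl; have ex3 := eL 3 erefl.
simpl in ex1, ex2, ex3.
have d : forall i j, i < 4 -> j < 4 -> i != j -> nth c L i != nth c L j.
  by move=> i j hi hj; rewrite (@nth_uniq _ c L i j hi hj Hu).
have h12 : t1 != t2 := d 1 2 isT isT isT.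
have h23 : t2 != t3 := d 2 3 isT isT isT.
have h31 : t3 != t1 := d 3 1 isT isT isT.
apply: col_of_nat; apply: (paths_color (x0 := c) (e := e) HU).
  by move=> v; rewrite /e; case: (index v L) => [|[|[|[|?]]]] //=; rewrite nth_nil.
rewrite /= !(pair_ok c (e := e)) ?ex1 ?ex2 ?ex3 //.
by rewrite (pft_ok3 e c P1) ?(pft_ok3 e c P2) ?(pft_ok3 e c P3).
Qed.

Lemma type3_col (V : finType) (G : sgraph V) : FC_type3 G -> colorableb G 3.
Proof.
case=> [a0 [a1 [p1 [p2 [p3 [_ [P1 P2 P3] [s1 s2 s3] HU]]]]]].
apply: col_of_nat; apply: (paths_color (x0 := a0) (e := fun _ => 0) HU) => //.
rewrite /= (pft_ok3 (fun _ => 0) a0 P1) ?(pft_ok3 (fun _ => 0) a0 P2)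
  ?(pft_ok3 (fun _ => 0) a0 P3) //; lia.
Qed.

Lemma type4_col (V : finType) (G : sgraph V) : FC_type4 G ->
  ~ (exists n, is_wheel G n /\ ~~ odd n) -> colorableb G 3.
Proof.
case=> n [n4 [R [[f [fb Hadj]] _]]] NW.
case: (boolP (odd n.-1)) => hm; last first.
  apply: col_of_nat; exists (fun v => wcolp (f v)); split.
    by move=> v; case: (f v) => [i|] //=; lia.
  by move=> x y; rewrite Hadj; apply: wcolp_ok.
case: (classic (exists r : 'I_n.-1, r \notin R)) => [[r rR]|Hno].
  apply: col_of_nat; exists (fun v => wcolr r 2 (f v)); split.
    by move=> v; case: (f v) => [i|] //=; do ! case: ifP; lia.
  move=> x y; rewrite Hadj; apply: wcolr_ok => //; first by lia.
  - by move=> i iR; rewrite orbF; apply: contraTneq iR => /val_inj ->.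
  - by right.
exfalso; apply: NW; exists n; split; last first.
  by move: hm; case: n n4 {f fb Hadj R Hno} => [|n] //= _; case: (odd n).
split=> //; exists f; split=> // x y; rewrite Hadj.
suff -> : R = setT by [].
apply/setP => i; rewrite in_setT; apply: contraT => iR; exfalso; apply: Hno; by exists i.
Qed.

Theorem proposition1 (V : finType) (G : sgraph V) :
  (in_FC G ->
     ~ is_K4 G -> ~ (exists n, is_wheel G n /\ ~~ odd n) ->
     chromatic_number G <= 3) /\
  (is_K4 G \/ (exists n, is_wheel G n /\ ~~ odd n) ->
     chromatic_number G = 4).
Proof.
split.
  move=> HFC _ NW; apply: chi_le3.
  case: HFC => [T|[T|[T|[T|[T|[T|T]]]]]].
  - exact: type1_col.
  - exact: type2_col.
  - exact: type3_col.
  - exact: type4_col.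
  - by case: T => n [_ [f [fb _ Hnc]]]; apply: (outer_color fb Hnc).
  - case: T => [H1|[_ [[f [fb Hnc]] _]]]; last exact: (outer_color fb Hnc).
    apply: col_of_nat; exists (fun _ => 0); split=> // x y.
    have /fintype_le1P Hall : #|V| <= 1 by rewrite H1.
    by rewrite (Hall x y) (adj_irr G).
  - by case: T => _ [f [fb Hnc]]; apply: (outer_color fb Hnc).
case=> [[HV Hall]|[n [[n4 [f [fb Hadj]]] hn]]].
  apply: chi_eq4.
    apply: col_of_nat; exists (fun v => val (enum_rank v)); split.
      by move=> v; rewrite -HV; exact: ltn_ord.
    move=> x y xy; apply: contraTneq xy => /val_inj /enum_rank_inj ->.
    by rewrite (adj_irr G).
  move=> /existsP [c /forallP Hc].
  have ci : injective c.
    move=> x y cxy; apply/eqP; apply: contraT => nxy.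
    by have := forallP (Hc x) y; rewrite (Hall _ _ nxy) cxy eqxx.
  by have := leq_card c ci; rewrite HV card_ord.
have hm : odd n.-1 by case: n n4 {f fb Hadj} hn => [|n] //= _; case: (odd n).
apply: chi_eq4; last first.
  by apply: (wheel_not3 fb Hadj hm); lia.
apply: col_of_nat; exists (fun v => wcolr 0 3 (f v)); split.
  move=> v; case: (f v) => [i|] //=; case: ifP => _ //; have := @ltn_pmod (nat_of_ord i).+1 2 isT; lia.
move=> x y; rewrite Hadj; apply: wcolr_ok => //; first by lia.
- by lia.
- by move=> i _; rewrite orbT.
- by left.
Qed.
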